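(* Let $s,t\in[0,\infty[$, $r\in[1,\infty[$ with $r'=\frac r{r-1}$, and $b\in[-1,1]$. Let $\varkappa(r)=\sup_{u\in]0,1[}\big[(1+u^{1/r})(1+u^{1/r'})(1+u^{1/2})^{-2}\big]$. Then (l1) $\frac4{rr'}(s^{r/2}-t^{r/2})^2\le(s-t)(s^{r-1}-t^{r-1})\le(s^{r/2}-t^{r/2})^2$; (l2) $(s^{r/2}+t^{r/2})^2\le(s+t)(s^{r-1}+t^{r-1})\le\varkappa(r)(s^{r/2}+t^{r/2})^2$; (l3) $\frac4{rr'}(s^r+t^r+2b(st)^{r/2})\le s^r+t^r+b(st^{r-1}+ts^{r-1})$; (l4) $|b|\,|st^{r-1}-ts^{r-1}|\le\frac{|r-2|}{2\sqrt{r-1}}\big[s^r+t^r-\sqrt{1-b^2}(st^{r-1}+ts^{r-1})\big]$; (l5) $s^r+t^r+b(st^{r-1}+ts^{r-1})\le\varkappa(r)(s^r+t^r+2b(st)^{r/2})$. *)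

(* Defs.v *)
From HB Require Import structures.
From mathcomp Require Import all_boot all_order all_algebra.
From mathcomp Require Import all_classical all_reals all_analysis.
Set Implicit Arguments. Unset Strict Implicit. Unset Printing Implicit Defensive.
Import Order.TTheory GRing.Theory Num.Theory.
Local Open Scope classical_set_scope.
Local Open Scope ring_scope.

(* 1/r' where r' = r/(r-1) is the conjugate exponent; for r = 1, r' = +oo
   and 1/r' = 0, so 1/r' = (r-1)/r for all r >= 1. *)
Definition inv_conj {R : realType} (r : R) : R := (r - 1) / r.

Definition four_rr' {R : realType} (r : R) : R := 4 * inv_conj r / r.

Definition varkappa {R : realType} (r : R) : R :=
  sup [set (1 + u `^ r^-1) * (1 + u `^ inv_conj r) / (1 + u `^ 2^-1) ^+ 2
      | u in `]0, 1[%classic].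

(* Main.v *)
From HB Require Import structures.
From mathcomp Require Import all_boot all_order all_algebra.
From mathcomp Require Import all_classical all_reals all_analysis.
From mathcomp Require Import ring lra.
Require Import Defs.
Import Order.TTheory GRing.Theory Num.Theory.
Local Open Scope ring_scope.
Local Open Scope classical_set_scope.

Section S.
Variable R : realType.

Lemma is_derive_expN (x : R) : is_derive x 1 (fun y => expR (- y)) (- expR (- x)).
Proof.
have -> : (fun y => expR (-y)) = (fun y => (expR y)^-1) :> (R -> R).
  by apply/funext => y; rewrite expRN.
apply: DeriveDef.
  apply: derivableV. rewrite expR_eq0 //. exact: derivable_expR.
rewrite deriveV ?expR_eq0 // derive_val expRN.
have e0 : expR x != 0 by rewrite expR_eq0.
rewrite -[_ *: _]/(_ * _). by field.
Qed.
Existing Instance is_derive_expN.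

Definition sh (x : R) := expR x - expR (- x).
Definition ch (x : R) := expR x + expR (- x).

Lemma is_derive_sh (x : R) : is_derive x 1 sh (ch x).
Proof.
have -> : sh = expR - (fun y => expR (- y)) by apply/funext.
apply: is_derive_eq. by rewrite /ch opprK.
Qed.

Lemma is_derive_ch (x : R) : is_derive x 1 ch (sh x).
Proof.
have -> : ch = expR + (fun y => expR (- y)) by apply/funext.
apply: is_derive_eq. by rewrite /sh.
Qed.
Existing Instance is_derive_sh.
Existing Instance is_derive_ch.

Lemma sh_ge0 (x : R) : 0 <= x -> 0 <= sh x.
Proof. by move=> x0; rewrite /sh subr_ge0 ler_expR; lra. Qed.

Lemma ch_mono (c y : R) : 0 <= c -> c <= y -> ch c <= ch y.
Proof.
move=> c0 cy.
have h : ch y - ch c = (expR y - expR c) * (1 - expR (- (y + c))).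
  rewrite /ch !expRN expRD. have := expR_gt0 y; have := expR_gt0 c. move=> h1 h2. field. by rewrite !gt_eqF.
rewrite -subr_ge0 h mulr_ge0 // subr_ge0 ?ler_expR // expR_le1; lra.
Qed.

Lemma shA (x : R) : 0 <= x -> sh x <= x * ch x.
Proof.
move=> x0.
pose g y := y * ch y - sh y.
have dg (y : R) : is_derive y 1 g (y * sh y).
  have -> : g = id * ch - sh by apply/funext.
  apply: is_derive_eq.
  by rewrite -[LHS]/(y * sh y + ch y * 1 - ch y) mulr1 addrK.
have := @ger0_derive1_ndecr R g 0 x.
have gE : g 0 = 0 by rewrite /g /sh oppr0 mul0r subrr subr0.
move=> H; have := H _ _ _ _ _ (lexx 0) x0 (lexx x).
rewrite gE /g subr_ge0; apply.
- by move=> y _; apply: ex_derive.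
- move=> y; rewrite in_itv /= => /andP[y0 _].
  by rewrite derive1E derive_val mulr_ge0 ?sh_ge0 ?ltW.
- by apply: derivable_within_continuous => y _; apply: ex_derive.
Qed.

Lemma shM (c m : R) : 0 <= c -> c <= m -> m * sh c <= c * sh m.
Proof.
move=> c0 cm.
pose k y := c * sh y - y * sh c.
have dk (y : R) : is_derive y 1 k (c * ch y - sh c).
  have -> : k = cst c * sh - id * cst (sh c) by apply/funext.
  apply: is_derive_eq.
  by rewrite -[LHS]/(c * ch y + sh y * 0 - (y * 0 + sh c * 1)) !mulr0 addr0 add0r mulr1.
have := @ger0_derive1_ndecr R k c m.
move=> H; have := H _ _ _ _ _ (lexx c) cm (lexx m).
have kE : k c = 0 by rewrite /k mulrC subrr.
rewrite kE /k subr_ge0; apply.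
- by move=> y _; apply: ex_derive.
- move=> y; rewrite in_itv /= => /andP[cy _].
  rewrite derive1E derive_val subr_ge0.
  apply: (le_trans (@shA c c0)); apply: ler_wpM2l => //.
  by apply: ch_mono => //; apply: ltW.
- by apply: derivable_within_continuous => y _; apply: ex_derive.
Qed.

Lemma shN (x : R) : sh (- x) = - sh x.
Proof. by rewrite /sh opprK opprB. Qed.

Lemma sh0 : sh 0 = 0.
Proof. by rewrite /sh oppr0 subrr. Qed.

Lemma sh_sqr_norm (x : R) : sh `|x| ^+ 2 = sh x ^+ 2.
Proof.
have [x0|x0] := leP 0 x; first by rewrite ger0_norm.
by rewrite ltr0_norm // shN sqrrN.
Qed.

Lemma sqM (u v d : R) : `|u| <= `|v| ->
  v ^+ 2 * sh (u * d) ^+ 2 <= u ^+ 2 * sh (v * d) ^+ 2.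
Proof.
move=> uv.
have [->|d0] := eqVneq d 0; first by rewrite !mulr0 sh0 expr0n /= !mulr0.
have cm : `|u * d| <= `|v * d| by rewrite !normrM ler_wpM2r.
have key := @shM _ _ (normr_ge0 _) cm.
have s1 : 0 <= sh `|u * d| by apply: sh_ge0.
have s2 : 0 <= sh `|v * d| by apply: sh_ge0.
have key2 : (`|v * d| * sh `|u * d|) ^+ 2 <= (`|u * d| * sh `|v * d|) ^+ 2.
  rewrite ler_sqr ?nnegrE ?mulr_ge0 //.
move: key2; rewrite !exprMn (sh_sqr_norm (u * d)) (sh_sqr_norm (v * d)).
rewrite (real_normK (num_real (u * d))) (real_normK (num_real (v * d))) !exprMn => h.
have dp : 0 < d ^+ 2 by rewrite lt_def sqr_ge0 sqrf_eq0 d0.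
rewrite -(ler_pM2r dp).
by move: h; rewrite mulrAC [X in _ <= X]mulrAC.
Qed.

Lemma shprod (p q : R) : sh (p - q) * sh (p + q) = sh p ^+ 2 - sh q ^+ 2.
Proof.
rewrite /sh !opprD !opprK !expRD !expRN.
have := expR_gt0 p; have := expR_gt0 q => hq hp.
by field; rewrite !gt_eqF.
Qed.

Lemma dE (m d a : R) : expR ((m + d) * a) - expR ((m - d) * a) = expR (m * a) * sh (d * a).
Proof. by rewrite mulrDl mulrBl !expRD /sh; ring. Qed.

Lemma sE (m d a : R) : expR ((m + d) * a) + expR ((m - d) * a) = expR (m * a) * ch (d * a).
Proof. by rewrite mulrDl mulrBl !expRD /ch; ring. Qed.

Lemma alg1 (r Q SP SU : R) : 1 <= r -> 0 <= Q ->
  (r / 2) ^+ 2 * SU <= ((r - 2) / 2) ^+ 2 * SP ->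
  four_rr' r * (Q * SP) <= Q * (SP - SU).
Proof.
move=> r1 Q0 h.
have r0 : r != 0 by rewrite gt_eqF // (lt_le_trans ltr01).
rewrite -subr_ge0.
have -> : Q * (SP - SU) - four_rr' r * (Q * SP)
   = Q * (((r - 2) / 2) ^+ 2 * SP - (r / 2) ^+ 2 * SU) / (r / 2) ^+ 2.
  rewrite /four_rr' /inv_conj. by field.
apply: divr_ge0; last exact: sqr_ge0.
by apply: mulr_ge0 => //; rewrite subr_ge0.
Qed.

Lemma core1_pos (X Y r : R) : 1 <= r ->
  four_rr' r * (expR (X * (r / 2)) - expR (Y * (r / 2))) ^+ 2
  <= (expR X - expR Y) * (expR (X * (r - 1)) - expR (Y * (r - 1))).
Proof.
move=> r1.
set m := (X + Y) / 2; set d := (X - Y) / 2.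
have eX : X = m + d by rewrite /m /d; by field.
have eY : Y = m - d by rewrite /m /d; by field.
rewrite eX eY !dE.
have -> : expR (m + d) - expR (m - d) = expR m * sh d by rewrite expRD expRD /sh; ring.
have hE : expR (m * (r / 2)) ^+ 2 = expR m * expR (m * (r - 1)).
  rewrite expr2 -!expRD; congr expR; by field.
have hs : sh d * sh (d * (r - 1)) = sh (d * (r / 2)) ^+ 2 - sh (d * ((r - 2) / 2)) ^+ 2.
  rewrite -shprod; congr (sh _ * sh _); by field.
rewrite exprMn hE.
have -> : expR m * sh d * (expR (m * (r - 1)) * sh (d * (r - 1)))
  = (expR m * expR (m * (r - 1))) * (sh d * sh (d * (r - 1))) by ring.
rewrite hs; apply: alg1 => //.
rewrite (mulrC d) (mulrC d); apply: sqM.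
rewrite !normrM ler_wpM2r // (ger0_norm (x := r)); last lra.
rewrite ler_norml; apply/andP; split; lra.
Qed.

Lemma chsh (x : R) : ch x ^+ 2 = sh x ^+ 2 + 4.
Proof. rewrite /ch /sh expRN; have := expR_gt0 x => h. by field; rewrite gt_eqF. Qed.

Lemma dE1 (a b : R) : expR (a + b) - expR (a - b) = expR a * sh b.
Proof. by rewrite !expRD /sh; ring. Qed.

Lemma core4_pos (X Y r : R) : 1 <= r ->
  4 * (r - 1) * (expR (X + Y * (r - 1)) - expR (Y + X * (r - 1))) ^+ 2
  <= (r - 2) ^+ 2 * ((expR (X * r) + expR (Y * r)) ^+ 2
                     - (expR (X + Y * (r - 1)) + expR (Y + X * (r - 1))) ^+ 2).
Proof.
move=> r1.
set m := (X + Y) / 2; set d := (X - Y) / 2.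
have eX : X = m + d by rewrite /m /d; by field.
have eY : Y = m - d by rewrite /m /d; by field.
have e1 : X + Y * (r - 1) = m * r + d * (2 - r) by rewrite eX eY; ring.
have e2 : Y + X * (r - 1) = m * r - d * (2 - r) by rewrite eX eY; ring.
rewrite e1 e2 dE1.
have -> : expR (m * r + d * (2 - r)) + expR (m * r - d * (2 - r)) = expR (m * r) * ch (d * (2 - r)).
  by rewrite !expRD /ch; ring.
rewrite eX eY sE !exprMn !chsh.
have h := @sqM (2 - r) r d.
rewrite (mulrC (2 - r)) (mulrC r) in h.
have : r ^+ 2 * sh (d * (2 - r)) ^+ 2 <= (2 - r) ^+ 2 * sh (d * r) ^+ 2.
  apply: h; rewrite (ger0_norm (x := r)); last lra.
  rewrite ler_norml; apply/andP; split; lra.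
move=> {}h; rewrite -subr_ge0.
set E := expR (m * r) ^+ 2.
have E0 : 0 <= E by rewrite /E sqr_ge0.
have -> : (r - 2) ^+ 2 * (E * (sh (d * r) ^+ 2 + 4) - E * (sh (d * (2 - r)) ^+ 2 + 4)) -
   4 * (r - 1) * (E * sh (d * (2 - r)) ^+ 2)
   = E * ((2 - r) ^+ 2 * sh (d * r) ^+ 2 - r ^+ 2 * sh (d * (2 - r)) ^+ 2) by ring.
by apply: mulr_ge0 => //; rewrite subr_ge0.
Qed.

Lemma pmul (x r : R) : 0 <= x -> 1 <= r -> x * x `^ (r - 1) = x `^ r.
Proof. move=> x0 r1; apply: mulr_powRB1 => //; lra. Qed.

Lemma psq (x r : R) : 0 <= x -> (x `^ (r / 2)) ^+ 2 = x `^ r.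
Proof.
move=> x0; rewrite -powR_mulrn ?powR_ge0 // -powRrM.
by congr (_ `^ _); rewrite mulrAC -mulrA mulfV ?mulr1 // pnatr_eq0.
Qed.

Lemma pexp (X a : R) : expR X `^ a = expR (X * a).
Proof. by rewrite expRM. Qed.

Lemma amgm (x y a b : R) : 0 <= x -> 0 <= y -> 0 <= a -> 0 <= b ->
  x * y = (a * b) ^+ 2 -> 2 * (a * b) <= x + y.
Proof.
move=> x0 y0 a0 b0 e.
rewrite -ler_sqr ?nnegrE ?addr_ge0 ?mulr_ge0 //.
rewrite exprMn -e -subr_ge0.
have -> : (x + y) ^+ 2 - 2 ^+ 2 * (x * y) = (x - y) ^+ 2 by ring.
exact: sqr_ge0.
Qed.

Lemma four_ge0 (r : R) : 1 <= r -> 0 <= four_rr' r.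
Proof.
move=> r1; rewrite /four_rr' /inv_conj; apply: divr_ge0; last lra.
apply: mulr_ge0; first lra. apply: divr_ge0; lra.
Qed.

Lemma four_le1 (r : R) : 1 <= r -> four_rr' r <= 1.
Proof.
move=> r1; have r0 : r != 0 by apply/eqP => e; rewrite e in r1; lra.
rewrite -subr_ge0.
have -> : 1 - four_rr' r = ((r - 2) / r) ^+ 2 by rewrite /four_rr' /inv_conj; field.
exact: sqr_ge0.
Qed.

Lemma core1 (s t r : R) : 0 <= s -> 0 <= t -> 1 <= r ->
  four_rr' r * (s `^ (r / 2) - t `^ (r / 2)) ^+ 2
  <= (s - t) * (s `^ (r - 1) - t `^ (r - 1)).
Proof.
move=> s0 t0 r1.
have [e1|r1'] := eqVneq r 1.
  rewrite e1 subrr !powRr0 subrr mulr0 /four_rr' /inv_conj subrr !mul0r.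
  by rewrite mulr0 mul0r.
have r1s : 1 < r by rewrite lt_neqAle eq_sym r1' r1.
have h0 : r != 0 by apply/eqP => e; lra.
have h2 : r / 2 != 0 by rewrite mulf_neq0 // invr_eq0.
have h1 : r - 1 != 0 by apply/eqP => e; lra.
have [->|sp] := eqVneq s 0.
  rewrite !powR0 // !sub0r sqrrN mulrNN pmul // -(@psq t r t0).
  by rewrite -[X in _ <= X]mul1r ler_wpM2r ?sqr_ge0 ?four_le1.
have [->|tp] := eqVneq t 0.
  rewrite !powR0 // !subr0 pmul // -(@psq s r s0).
  by rewrite -[X in _ <= X]mul1r ler_wpM2r ?sqr_ge0 ?four_le1.
have sp' : 0 < s by rewrite lt_def sp s0.
have tp' : 0 < t by rewrite lt_def tp t0.
rewrite -(lnK sp') -(lnK tp') !pexp.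
exact: core1_pos.
Qed.

Lemma core4 (s t r : R) : 0 <= s -> 0 <= t -> 1 < r ->
  4 * (r - 1) * (s * t `^ (r - 1) - t * s `^ (r - 1)) ^+ 2
  <= (r - 2) ^+ 2 * ((s `^ r + t `^ r) ^+ 2
                     - (s * t `^ (r - 1) + t * s `^ (r - 1)) ^+ 2).
Proof.
move=> s0 t0 r1.
have h0 : r != 0 by apply/eqP => e; lra.
have h1 : r - 1 != 0 by apply/eqP => e; lra.
have [->|sp] := eqVneq s 0.
  rewrite !powR0 // !mul0r !mulr0 !add0r oppr0 expr0n /= mulr0 subr0.
  by rewrite mulr_ge0 ?sqr_ge0.
have [->|tp] := eqVneq t 0.
  rewrite !powR0 // !mul0r !mulr0 !addr0 subrr expr0n /= mulr0 subr0.
  by rewrite mulr_ge0 ?sqr_ge0.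
have sp' : 0 < s by rewrite lt_def sp s0.
have tp' : 0 < t by rewrite lt_def tp t0.
rewrite -(lnK sp') -(lnK tp') !pexp -!expRD.
apply: core4_pos; lra.
Qed.

Definition F (r u : R) := (1 + u `^ r^-1) * (1 + u `^ inv_conj r) / (1 + u `^ 2^-1) ^+ 2.

Lemma pow_le1 (u e : R) : 0 < u <= 1 -> 0 <= e -> u `^ e <= 1.
Proof. by move=> hu e0; rewrite -(powRr0 u); apply: ger_powR. Qed.

Lemma inv_conj_ge0 (r : R) : 1 <= r -> 0 <= inv_conj r.
Proof. by move=> r1; rewrite /inv_conj divr_ge0 //; lra. Qed.

Lemma F_le4 (r u : R) : 1 <= r -> 0 < u < 1 -> F r u <= 4.
Proof.
move=> r1 /andP[u0 u1].
have hu : 0 < u <= 1 by rewrite u0 ltW.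
have ri : 0 <= r^-1 by rewrite invr_ge0; lra.
have a1 := @pow_le1 u _ hu ri.
have b1 := @pow_le1 u _ hu (@inv_conj_ge0 r r1).
have c0 := powR_ge0 u 2^-1.
have a0 := powR_ge0 u r^-1.
have b0 := powR_ge0 u (inv_conj r).
rewrite /F ler_pdivrMr; last by rewrite exprn_gt0 //; lra.
apply: (@le_trans _ _ 4).
  rewrite (_ : 4 = 2 * 2) //; last by rewrite -natrM.
  by apply: ler_pM; lra.
rewrite -[X in X <= _]mulr1 ler_wpM2l //.
rewrite -[X in X <= _](expr1n _ 2) ler_sqr ?nnegrE; lra.
Qed.

Lemma kappa_ub (r u : R) : 1 <= r -> 0 < u < 1 -> F r u <= varkappa r.
Proof.
move=> r1 hu; rewrite /varkappa; apply: ub_le_sup.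
  exists 4 => y. move=> [v hv <-].
  by apply: (@F_le4 r v r1); move: hv; rewrite /= in_itv.
by exists u => //=; rewrite in_itv.
Qed.

Lemma F_ge1 (r u : R) : 1 <= r -> 0 < u -> 1 <= F r u.
Proof.
move=> r1 u0.
have r0 : r != 0 by apply/eqP => e; lra.
set a := u `^ r^-1; set b := u `^ inv_conj r; set c := u `^ 2^-1.
have ab : a * b = u.
  rewrite /a /b -powRD; last by apply/implyP => _; rewrite gt_eqF.
  rewrite (_ : r^-1 + inv_conj r = 1) ?powRr1 ?ltW //.
  by rewrite /inv_conj; field.
have cc : c * c = u.
  rewrite /c -powRD; last by apply/implyP => _; rewrite gt_eqF.
  rewrite (_ : 2^-1 + 2^-1 = 1 :> R) ?powRr1 ?ltW //.
  by field.
have h := @amgm a b c 1 (powR_ge0 _ _) (powR_ge0 _ _) (powR_ge0 _ _) ler01.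
rewrite mulr1 in h; have {h} h := h (ltac:(by rewrite ab expr2 cc)).
rewrite /F -/a -/b -/c ler_pdivlMr; last by rewrite exprn_gt0 // ltr_pwDl // powR_ge0.
rewrite mul1r -subr_ge0.
have -> : (1 + a) * (1 + b) - (1 + c) ^+ 2 = a + b - 2 * c + (a * b - c * c) by ring.
by rewrite ab cc subrr addr0 subr_ge0.
Qed.

Lemma kappa_ge1 (r : R) : 1 <= r -> 1 <= varkappa r.
Proof.
move=> r1; apply: (le_trans (@F_ge1 r 2^-1 r1 _)); first by rewrite invr_gt0.
apply: kappa_ub => //; rewrite invr_gt0 /= invf_lt1 //; lra.
Qed.

Lemma kappa1_ge2 : 2 <= varkappa (1 : R).
Proof.
rewrite leNgt; apply/negP => hk.
set k := varkappa 1 in hk *.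
have k1 : 1 <= k by apply: kappa_ge1.
set w := (2 - k) / 8.
have w0 : 0 < w by rewrite /w; apply: divr_gt0; lra.
have w1 : w < 1 by rewrite /w ltr_pdivrMr; lra.
have kE : k = 2 - 8 * w by rewrite /w; field.
have hu : 0 < w ^+ 2 < 1.
  rewrite exprn_gt0 //= -(expr1n _ 2) ltr_sqr ?nnegrE //; lra.
have := @kappa_ub 1 (w ^+ 2) (lexx 1) hu.
rewrite /F invr1 powRr1 ?sqr_ge0 // /inv_conj subrr mul0r powRr0.
rewrite powR12_sqrt ?sqr_ge0 // sqrtr_sqr ger0_norm; last lra.
rewrite -/k ler_pdivrMr; last by rewrite exprn_gt0 //; lra.
apply/negP; rewrite -ltNge kE -subr_gt0.
have -> : (1 + w ^+ 2) * (1 + 1) - (2 - 8 * w) * (1 + w) ^+ 2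
  = w * (4 + 16 * w + 8 * w ^+ 2) by ring.
apply: mulr_gt0 => //; have := sqr_ge0 w; lra.
Qed.

Lemma kappa_main (s t r : R) : 0 <= s -> 0 <= t -> 1 <= r ->
  (s + t) * (s `^ (r - 1) + t `^ (r - 1)) <= varkappa r * (s `^ (r / 2) + t `^ (r / 2)) ^+ 2.
Proof.
move=> s0 t0 r1.
wlog ts : s t s0 t0 / t <= s.
  move=> H; have [ts|st] := leP t s; first exact: H.
  rewrite addrC (addrC (s `^ (r - 1))) (addrC (s `^ (r / 2))); apply: H => //; exact: ltW.
have k1 := @kappa_ge1 r r1.
have r0 : r != 0 by apply/eqP => e; lra.
have h2 : r / 2 != 0 by rewrite mulf_neq0 // invr_eq0.
have [->|tp] := eqVneq t 0.
  have [e1|r1'] := eqVneq r 1.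
    rewrite e1 subrr !powRr0 addr0 mul1r powR0 ?invr_eq0 // addr0.
    rewrite powR12_sqrt // sqr_sqrtr // mulrC ler_wpM2r //.
    exact: kappa1_ge2.
  have h1 : r - 1 != 0 by rewrite subr_eq0.
  rewrite !powR0 // !addr0 pmul // psq //.
  by rewrite -[X in X <= _]mul1r ler_wpM2r // powR_ge0.
have tp' : 0 < t by rewrite lt_def tp t0.
have sp : 0 < s by apply: lt_le_trans ts.
have [e|ts'] := eqVneq t s.
  rewrite e.
  have -> : (s + s) * (s `^ (r - 1) + s `^ (r - 1)) = 4 * (s * s `^ (r - 1)) by ring.
  have -> : varkappa r * (s `^ (r / 2) + s `^ (r / 2)) ^+ 2
     = varkappa r * (4 * (s `^ (r / 2)) ^+ 2) by ring.
  rewrite pmul // psq // -[X in X <= _]mul1r ler_wpM2r //.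
  by rewrite mulr_ge0 // powR_ge0.
have tlt : t < s by rewrite lt_neqAle ts' ts.
have [u [u0 u1 tE]] : exists u, [/\ 0 < u, u < 1 & t = s * u].
  exists (t / s); split; first by rewrite divr_gt0.
    by rewrite ltr_pdivrMr // mul1r.
  by rewrite mulrC divfK // gt_eqF.
have w0 : 0 < u `^ r < 1.
  rewrite powR_gt0 //=.
  have rp : 0 < r by lra.
  have := @gt0_ltr_powR R r rp u 1; rewrite !nnegrE ltW // ler01 powR1 => ->//.
have := @kappa_ub r _ r1 w0.
rewrite /F -!powRrM mulfV // (powRr1 (ltW u0)).
rewrite (_ : r * inv_conj r = r - 1); last by rewrite /inv_conj; field.
rewrite ler_pdivrMr; last by rewrite exprn_gt0 // ltr_pwDl // powR_ge0.
rewrite tE !powRM; try exact: ltW. move=> h.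
have -> : (s + s * u) * (s `^ (r - 1) + s `^ (r - 1) * u `^ (r - 1))
   = (s * s `^ (r - 1)) * ((1 + u) * (1 + u `^ (r - 1))) by ring.
have -> : varkappa r * (s `^ (r / 2) + s `^ (r / 2) * u `^ (r / 2)) ^+ 2
   = (s `^ (r / 2)) ^+ 2 * (varkappa r * (1 + u `^ (r / 2)) ^+ 2) by ring.
rewrite (@pmul s r (ltW sp) r1) (@psq s r (ltW sp)).
by apply: ler_wpM2l => //; rewrite powR_ge0.
Qed.
End S.

Local Close Scope classical_set_scope.

Theorem lemma5 (R : realType) (s t r b : R)
  (hs : 0 <= s) (ht : 0 <= t) (hr : 1 <= r) (hb1 : -1 <= b) (hb2 : b <= 1) :
  [/\ (* (l1) *)
      four_rr' r * (s `^ (r / 2) - t `^ (r / 2)) ^+ 2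
        <= (s - t) * (s `^ (r - 1) - t `^ (r - 1))
      /\ (s - t) * (s `^ (r - 1) - t `^ (r - 1))
        <= (s `^ (r / 2) - t `^ (r / 2)) ^+ 2,
      (* (l2) *)
      (s `^ (r / 2) + t `^ (r / 2)) ^+ 2
        <= (s + t) * (s `^ (r - 1) + t `^ (r - 1))
      /\ (s + t) * (s `^ (r - 1) + t `^ (r - 1))
        <= varkappa r * (s `^ (r / 2) + t `^ (r / 2)) ^+ 2,
      (* (l3) *)
      four_rr' r * (s `^ r + t `^ r + 2 * b * (s * t) `^ (r / 2))
        <= s `^ r + t `^ r + b * (s * t `^ (r - 1) + t * s `^ (r - 1)),
      (* (l4); for r = 1 the constant is +oo, so the claim is vacuous there *)
      1 < r -> `|b| * `|s * t `^ (r - 1) - t * s `^ (r - 1)|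
        <= `|r - 2| / (2 * Num.sqrt (r - 1)) *
           (s `^ r + t `^ r - Num.sqrt (1 - b ^+ 2) * (s * t `^ (r - 1) + t * s `^ (r - 1)))
    & (* (l5) *)
      s `^ r + t `^ r + b * (s * t `^ (r - 1) + t * s `^ (r - 1))
        <= varkappa r * (s `^ r + t `^ r + 2 * b * (s * t) `^ (r / 2))].
Proof.
have r0 : r != 0 by apply/eqP => e; lra.
have ps := @pmul R s r hs hr; have pt := @pmul R t r ht hr.
have psa := @psq R s r hs; have psb := @psq R t r ht.
have hC : (s * t) `^ (r / 2) = s `^ (r / 2) * t `^ (r / 2) by rewrite powRM.
rewrite hC.
have c1 := @core1 R s t r hs ht hr.
have kap := @kappa_main R s t r hs ht hr.
have k1 := @kappa_ge1 R r hr.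
have f0 := @four_ge0 R r hr; have f1 := @four_le1 R r hr.
have amg : 2 * (s `^ (r / 2) * t `^ (r / 2)) <= s * t `^ (r - 1) + t * s `^ (r - 1).
  apply: amgm; rewrite ?mulr_ge0 ?powR_ge0 //.
  by rewrite exprMn psa psb -ps -pt; ring.
move: c1 kap amg.
have eAm : (s - t) * (s `^ (r - 1) - t `^ (r - 1))
   = (s `^ r + t `^ r) - (s * t `^ (r - 1) + t * s `^ (r - 1)) by rewrite -ps -pt; ring.
have eAp : (s + t) * (s `^ (r - 1) + t `^ (r - 1))
   = (s `^ r + t `^ r) + (s * t `^ (r - 1) + t * s `^ (r - 1)) by rewrite -ps -pt; ring.
have eCm : (s `^ (r / 2) - t `^ (r / 2)) ^+ 2
   = (s `^ r + t `^ r) - 2 * (s `^ (r / 2) * t `^ (r / 2)) by rewrite -psa -psb; ring.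
have eCp : (s `^ (r / 2) + t `^ (r / 2)) ^+ 2
   = (s `^ r + t `^ r) + 2 * (s `^ (r / 2) * t `^ (r / 2)) by rewrite -psa -psb; ring.
have Cp : 0 <= (s `^ r + t `^ r) + 2 * (s `^ (r / 2) * t `^ (r / 2)) by rewrite -eCp sqr_ge0.
have Cm : 0 <= (s `^ r + t `^ r) - 2 * (s `^ (r / 2) * t `^ (r / 2)) by rewrite -eCm sqr_ge0.
rewrite eAm eAp eCm eCp.
set A := s `^ r + t `^ r; set B := s * t `^ (r - 1) + t * s `^ (r - 1).
set C := s `^ (r / 2) * t `^ (r / 2); set k := varkappa r; set f := four_rr' r.
move=> c1 kap amg.
have l2l : A + 2 * C <= A + B by lra.
have h3 : f * (A + 2 * C) <= A + B.
  apply: le_trans l2l; rewrite -[X in _ <= X]mul1r; exact: ler_wpM2r.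
have h5 : A - B <= k * (A - 2 * C).
  apply: (@le_trans _ _ (A - 2 * C)); first lra.
  rewrite -[X in X <= _]mul1r; exact: ler_wpM2r.
split.
- split => //; lra.
- split => //; lra.
- rewrite -subr_ge0.
  have -> : A + b * B - f * (A + 2 * b * C)
    = ((1 + b) * (A + B - f * (A + 2 * C)) + (1 - b) * (A - B - f * (A - 2 * C))) / 2
    by field.
  apply: divr_ge0 => //; apply: addr_ge0; apply: mulr_ge0; lra.
- move=> r1.
  have c4 := @core4 R s t r hs ht r1.
  rewrite -/A -/B in c4.
  set D := s * t `^ (r - 1) - t * s `^ (r - 1) in c4 *.
  have A0 : 0 <= A by rewrite /A addr_ge0 ?powR_ge0.
  have B0 : 0 <= B by rewrite /B addr_ge0 ?mulr_ge0 ?powR_ge0.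
  set q := Num.sqrt (r - 1).
  have q0 : 0 < q by rewrite /q sqrtr_gt0; lra.
  have q2 : q ^+ 2 = r - 1 by rewrite /q sqr_sqrtr //; lra.
  set g := Num.sqrt (1 - b ^+ 2).
  have g0 : 0 <= g by rewrite /g sqrtr_ge0.
  have g2 : g ^+ 2 = 1 - b ^+ 2.
    rewrite /g sqr_sqrtr // (_ : 1 - b ^+ 2 = (1 - b) * (1 + b)); last by ring.
    apply: mulr_ge0; lra.
  set c := `|r - 2| / (2 * q).
  have c0 : 0 <= c by rewrite /c divr_ge0 // mulr_ge0 // ltW.
  have c2 : c ^+ 2 = (r - 2) ^+ 2 / (4 * (r - 1)).
    rewrite /c expr_div_n (real_normK (num_real _)) exprMn q2.
    by congr (_ / (_ * _)); rewrite expr2 -natrM.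
  clearbody c.
  have bb : `|b| ^+ 2 = b ^+ 2 by rewrite (real_normK (num_real _)).
  have dd : `|D| ^+ 2 = D ^+ 2 by rewrite (real_normK (num_real _)).
  have key : D ^+ 2 + (c * B) ^+ 2 <= (c * A) ^+ 2.
    rewrite -subr_ge0 !exprMn c2.
    have -> : ((r - 2) ^+ 2 / (4 * (r - 1)) * A ^+ 2 - (D ^+ 2 + (r - 2) ^+ 2 / (4 * (r - 1)) * B ^+ 2))
      = ((r - 2) ^+ 2 * (A ^+ 2 - B ^+ 2) - 4 * (r - 1) * D ^+ 2) / (4 * (r - 1)).
      field; apply/eqP => e; lra.
    apply: divr_ge0; first by rewrite subr_ge0.
    lra.
  have cs : (`|b| * `|D| + g * (c * B)) ^+ 2 <= D ^+ 2 + (c * B) ^+ 2.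
    rewrite -subr_ge0.
    have -> : D ^+ 2 + (c * B) ^+ 2 - (`|b| * `|D| + g * (c * B)) ^+ 2
       = (`|b| * (c * B) - g * `|D|) ^+ 2 + (1 - (`|b| ^+ 2 + g ^+ 2)) * (D ^+ 2 + (c * B) ^+ 2).
      by rewrite -dd; ring.
    by rewrite bb g2 (_ : 1 - (b ^+ 2 + (1 - b ^+ 2)) = 0) ?mul0r ?addr0 ?sqr_ge0 //; ring.
  have L0 : 0 <= `|b| * `|D| + g * (c * B) by rewrite addr_ge0 ?mulr_ge0.
  have R0 : 0 <= c * A by rewrite mulr_ge0.
  have : `|b| * `|D| + g * (c * B) <= c * A.
    by rewrite -ler_sqr ?nnegrE //; exact: (le_trans cs key).
  rewrite mulrBr; lra.
- rewrite -subr_ge0.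
  have -> : k * (A + 2 * b * C) - (A + b * B)
    = ((1 + b) * (k * (A + 2 * C) - (A + B)) + (1 - b) * (k * (A - 2 * C) - (A - B))) / 2
    by field.
  apply: divr_ge0 => //; apply: addr_ge0; apply: mulr_ge0; lra.
Qed.
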